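(* Let $S\in\mathcal{T}_2V$ and $\hat S\in\mathcal{T}_3V$ be symmetric tensors (invariant under all permutations of their arguments). Then $y_{t'}^{\ast}(S\otimes\hat S)=y_{t'}^{\ast}(\hat S\otimes S)$, and in coordinates with respect to any basis $$\big(y_{t'}^{\ast}(S\otimes\hat S)\big)_{ijkls}=\big(y_{t'}^{\ast}(\hat S\otimes S)\big)_{ijkls}=4\big\{S_{il}\hat S_{jks}-S_{jl}\hat S_{iks}+S_{jk}\hat S_{ils}-S_{ik}\hat S_{jls}\big\}.$$ Moreover, the vector space of all algebraic covariant derivative curvature tensors $\mathfrak R'\in\mathcal T_5V$ equals the set of all finite sums of tensors $y_{t'}^{\ast}(S\otimes\hat S)$ with $S\in\mathcal T_2V$, $\hat S\in\mathcal T_3V$ symmetric (equivalently, of tensors $y_{t'}^{\ast}(\hat S\otimes S)$).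
   Context: $\mathbb{K}=\mathbb{R}$ or $\mathbb{C}$; $V$ is a finite-dimensional $\mathbb{K}$-vector space, $\mathcal{T}_rV$ the space of $r$-times covariant tensors; coordinates $T_{i_1\dots i_r}=T(e_{i_1},\dots,e_{i_r})$ for a basis $(e_i)$. $(S\otimes\hat S)(v_1,\dots,v_5)=S(v_1,v_2)\hat S(v_3,v_4,v_5)$, $(\hat S\otimes S)(v_1,\dots,v_5)=\hat S(v_1,v_2,v_3)S(v_4,v_5)$. Permutations multiply by $(p\circ q)(i)=p(q(i))$. An element $a=\sum_{p}a(p)\,p\in\mathbb{K}[\mathcal{S}_r]$ acts on $T\in\mathcal{T}_rV$ by $(aT)(v_1,\dots,v_r)=\sum_p a(p)\,T(v_{p(1)},\dots,v_{p(r)})$, i.e. $(aT)_{i_1\dots i_r}=\sum_p a(p)T_{i_{p(1)}\dots i_{p(r)}}$; and $a^{\ast}:=\sum_p a(p)\,p^{-1}$. For a Young tableau $t$, $y_t=\sum_{p\in\mathcal H_t}\sum_{q\in\mathcal V_t}\mathrm{sign}(q)\,p\circ q$, with $\mathcal H_t$ ($\mathcal V_t$) the row- (column-) preserving permutations. $t'$ is the Young tableau with rows $(1,3,5)$ and $(2,4)$. An algebraic covariant derivative curvature tensor is a tensor $\mathfrak{R}'\in\mathcal{T}_5V$ with, for all $u,w,x,y,z\in V$: $\mathfrak R'(w,x,y,z,u)=-\mathfrak R'(w,x,z,y,u)=\mathfrak R'(y,z,w,x,u)$, $\mathfrak R'(w,x,y,z,u)+\mathfrak R'(w,y,z,x,u)+\mathfrak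 R'(w,z,x,y,u)=0$, and $\mathfrak R'(w,x,y,z,u)+\mathfrak R'(w,x,z,u,y)+\mathfrak R'(w,x,u,y,z)=0$. *)

(* Defs.v *)
From HB Require Import structures.
From mathcomp Require Import all_boot all_order all_algebra all_fingroup.
From mathcomp Require Import complex.
From mathcomp Require Import Rstruct.
From Stdlib Require Rdefinitions.

Set Implicit Arguments.
Unset Strict Implicit.
Unset Printing Implicit Defensive.

Import GRing.Theory.
Local Open Scope ring_scope.

Section Tensors.
Variables (K : fieldType) (V : vectType K).

Definition tensor (r : nat) := ('I_r -> V) -> K.

Definition multilinear (r : nat) (T : tensor r) : Prop :=
  forall (i : 'I_r) (v : 'I_r -> V) (a : K) (x y : V),
    T (fun j => if j == i then a *: x + y else v j)
    = a * T (fun j => if j == i then x else v j)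
      + T (fun j => if j == i then y else v j).

Definition symmetric (r : nat) (T : tensor r) : Prop :=
  forall (p : 'S_r) (v : 'I_r -> V), T (fun i => v (p i)) = T v.

Definition args2 (a b : V) : 'I_2 -> V := fun i => nth 0 [:: a; b] i.
Definition args3 (a b c : V) : 'I_3 -> V := fun i => nth 0 [:: a; b; c] i.
Definition args5 (a b c d e : V) : 'I_5 -> V :=
  fun i => nth 0 [:: a; b; c; d; e] i.

Definition tprod23 (S : tensor 2) (Sh : tensor 3) : tensor 5 :=
  fun v => S (fun i : 'I_2 => v (lshift 3 i)) * Sh (fun i : 'I_3 => v (rshift 2 i)).
Definition tprod32 (Sh : tensor 3) (S : tensor 2) : tensor 5 :=
  fun v => Sh (fun i : 'I_3 => v (lshift 2 i)) * S (fun i : 'I_2 => v (rshift 3 i)).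

End Tensors.

(* Young tableaux of 5 boxes, given by their rows (entries 1..5, as in the
   paper).  The columns are computed from the rows. *)
Definition tableau := seq (seq nat).
Definition tab_rows (t : tableau) : seq (seq nat) := t.
Definition tab_cols (t : tableau) : seq (seq nat) :=
  [seq [seq nth 0%N r c | r <- t & (c < size r)%N]
     | c <- iota 0 (size (head [::] t))].

(* permutations of {1..5} (here 'I_5, with box entry m <-> index m-1)
   mapping every block of blocks to itself *)
Definition preserves (blocks : seq (seq nat)) (p : 'S_5) : bool :=
  all (fun b => [forall i : 'I_5, (i.+1 \in b) ==> ((p i).+1 \in b)]) blocks.

Definition Hset (t : tableau) : {set 'S_5} := [set p | preserves (tab_rows t) p].
Definition Vset (t : tableau) : {set 'S_5} := [set q | preserves (tab_cols t) q].

Definition t' : tableau := [:: [:: 1; 3; 5]; [:: 2; 4]]%N.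

(* y_t = sum_{p in H_t} sum_{q in V_t} sign(q) p o q, and
   y_t^* = sum_{p,q} sign(q) (p o q)^{-1}, acting on T by
   (a T)(v_1..v_5) = sum_r a(r) T(v_{r(1)},...,v_{r(5)}).
   (p o q)^{-1}(i) = q^{-1}(p^{-1}(i)). *)
Definition ystar (K : fieldType) (V : vectType K) (t : tableau)
    (T : tensor V 5) : tensor V 5 :=
  fun v => \sum_(p in Hset t) \sum_(q in Vset t)
             (-1) ^+ odd_perm q * T (fun i => v ((q^-1)%g ((p^-1)%g i))).

Definition acdct (K : fieldType) (V : vectType K) (R : tensor V 5) : Prop :=
  multilinear R /\
  forall u w x y z : V,
    [/\ R (args5 w x y z u) = - R (args5 w x z y u),
        R (args5 w x y z u) = R (args5 y z w x u),
        R (args5 w x y z u) + R (args5 w y z x u) + R (args5 w z x y u) = 0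
      & R (args5 w x y z u) + R (args5 w x z u y) + R (args5 w x u y z) = 0].

Definition sym_tensor (K : fieldType) (V : vectType K) (r : nat) (T : tensor V r) :=
  multilinear T /\ symmetric T.

Definition all_sym (K : fieldType) (V : vectType K)
    (L : seq (tensor V 2 * tensor V 3)) : Prop :=
  List.Forall (fun P => sym_tensor P.1 /\ sym_tensor P.2) L.

Definition Thm1p9 (K : fieldType) : Prop :=
  forall V : vectType K,
  (forall (S : tensor V 2) (Sh : tensor V 3),
     sym_tensor S -> sym_tensor Sh ->
     ystar t' (tprod23 S Sh) = ystar t' (tprod32 Sh S) /\
     forall e : seq V, basis_of fullv e ->
     forall i j k l s : nat,
       (i < size e)%N -> (j < size e)%N -> (k < size e)%N ->
       (l < size e)%N -> (s < size e)%N ->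
       let E (m : nat) := e`_m in
       let S2 a b := S (args2 (E a) (E b)) in
       let S3 a b c := Sh (args3 (E a) (E b) (E c)) in
       ystar t' (tprod23 S Sh) (args5 (E i) (E j) (E k) (E l) (E s))
         = 4%:R * (S2 i l * S3 j k s - S2 j l * S3 i k s
                   + S2 j k * S3 i l s - S2 i k * S3 j l s) /\
       ystar t' (tprod32 Sh S) (args5 (E i) (E j) (E k) (E l) (E s))
         = 4%:R * (S2 i l * S3 j k s - S2 j l * S3 i k s
                   + S2 j k * S3 i l s - S2 i k * S3 j l s))
  /\
  (forall R : tensor V 5,
     (acdct R <->
       exists2 L : seq (tensor V 2 * tensor V 3),
         all_sym L &
         forall v, R v = \sum_(P <- L) ystar t' (tprod23 P.1 P.2) v) /\
     (acdct R <->
       exists2 L : seq (tensor V 2 * tensor V 3),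
         all_sym L &
         forall v, R v = \sum_(P <- L) ystar t' (tprod32 P.2 P.1) v)).

(* Main.v *)
Require Import Defs.
From mathcomp Require Import all_boot all_algebra all_fingroup complex Rstruct.
From mathcomp Require Import ring.
From Stdlib Require Rdefinitions.
From Stdlib Require Import FunctionalExtensionality.

Set Implicit Arguments.
Unset Strict Implicit.
Unset Printing Implicit Defensive.
Import GRing.Theory.
Local Open Scope ring_scope.

Definition o0 : 'I_5 := @Ordinal 5 0 isT.
Definition o1 : 'I_5 := @Ordinal 5 1 isT.
Definition o2 : 'I_5 := @Ordinal 5 2 isT.
Definition o3 : 'I_5 := @Ordinal 5 3 isT.
Definition o4 : 'I_5 := @Ordinal 5 4 isT.
Definition ordk (k : nat) : 'I_5 :=
  match k with 0 => o0 | 1 => o1 | 2 => o2 | 3 => o3 | _ => o4 end.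
Lemma ordkK k : (k < 5)%N -> val (ordk k) = k.
Proof. by case: k => [|[|[|[|[|k]]]]]. Qed.
Definition mkf (s : seq nat) : 'I_5 -> 'I_5 := fun i => ordk (nth 0%N s i).
Definition cs (s s' : seq nat) :=
  all (fun k => (nth 0%N s' (nth 0%N s k) == k) && (nth 0%N s k < 5)%N) (iota 0 5).
Lemma mkf_inj s s' : cs s s' -> injective (mkf s).
Proof.
move=> /allP H; apply: (@can_inj _ _ _ (mkf s')) => i; apply: val_inj.
have Hi : (nat_of_ord i \in iota 0 5) by rewrite mem_iota ltn_ord.
have /andP[/eqP E L] := H _ Hi.
by rewrite /mkf ordkK ?E // ordkK // E ltn_ord.
Qed.

Lemma injH0 : injective (mkf [:: 0; 1; 2; 3; 4]).
Proof. by apply: (@mkf_inj _ [:: 0; 1; 2; 3; 4]). Qed.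
Definition pH0 : 'S_5 := perm injH0.
Lemma injH1 : injective (mkf [:: 0; 3; 2; 1; 4]).
Proof. by apply: (@mkf_inj _ [:: 0; 3; 2; 1; 4]). Qed.
Definition pH1 : 'S_5 := perm injH1.
Lemma injH2 : injective (mkf [:: 0; 1; 4; 3; 2]).
Proof. by apply: (@mkf_inj _ [:: 0; 1; 4; 3; 2]). Qed.
Definition pH2 : 'S_5 := perm injH2.
Lemma injH3 : injective (mkf [:: 0; 3; 4; 1; 2]).
Proof. by apply: (@mkf_inj _ [:: 0; 3; 4; 1; 2]). Qed.
Definition pH3 : 'S_5 := perm injH3.
Lemma injH4 : injective (mkf [:: 2; 1; 0; 3; 4]).
Proof. by apply: (@mkf_inj _ [:: 2; 1; 0; 3; 4]). Qed.
Definition pH4 : 'S_5 := perm injH4.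
Lemma injH5 : injective (mkf [:: 2; 3; 0; 1; 4]).
Proof. by apply: (@mkf_inj _ [:: 2; 3; 0; 1; 4]). Qed.
Definition pH5 : 'S_5 := perm injH5.
Lemma injH6 : injective (mkf [:: 2; 1; 4; 3; 0]).
Proof. by apply: (@mkf_inj _ [:: 4; 1; 0; 3; 2]). Qed.
Definition pH6 : 'S_5 := perm injH6.
Lemma injH7 : injective (mkf [:: 2; 3; 4; 1; 0]).
Proof. by apply: (@mkf_inj _ [:: 4; 3; 0; 1; 2]). Qed.
Definition pH7 : 'S_5 := perm injH7.
Lemma injH8 : injective (mkf [:: 4; 1; 0; 3; 2]).
Proof. by apply: (@mkf_inj _ [:: 2; 1; 4; 3; 0]). Qed.
Definition pH8 : 'S_5 := perm injH8.
Lemma injH9 : injective (mkf [:: 4; 3; 0; 1; 2]).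
Proof. by apply: (@mkf_inj _ [:: 2; 3; 4; 1; 0]). Qed.
Definition pH9 : 'S_5 := perm injH9.
Lemma injH10 : injective (mkf [:: 4; 1; 2; 3; 0]).
Proof. by apply: (@mkf_inj _ [:: 4; 1; 2; 3; 0]). Qed.
Definition pH10 : 'S_5 := perm injH10.
Lemma injH11 : injective (mkf [:: 4; 3; 2; 1; 0]).
Proof. by apply: (@mkf_inj _ [:: 4; 3; 2; 1; 0]). Qed.
Definition pH11 : 'S_5 := perm injH11.
Definition Hl : seq 'S_5 := [:: pH0; pH1; pH2; pH3; pH4; pH5; pH6; pH7; pH8; pH9; pH10; pH11].
Definition Htl : seq (seq nat) := [:: [:: 0; 1; 2; 3; 4]; [:: 0; 3; 2; 1; 4]; [:: 0; 1; 4; 3; 2]; [:: 0; 3; 4; 1; 2]; [:: 2; 1; 0; 3; 4]; [:: 2; 3; 0; 1; 4]; [:: 2; 1; 4; 3; 0]; [:: 2; 3; 4; 1; 0]; [:: 4; 1; 0; 3; 2]; [:: 4; 3; 0; 1; 2]; [:: 4; 1; 2; 3; 0]; [:: 4; 3; 2; 1; 0]].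
Lemma injV0 : injective (mkf [:: 0; 1; 2; 3; 4]).
Proof. by apply: (@mkf_inj _ [:: 0; 1; 2; 3; 4]). Qed.
Definition pV0 : 'S_5 := perm injV0.
Lemma injV1 : injective (mkf [:: 0; 1; 3; 2; 4]).
Proof. by apply: (@mkf_inj _ [:: 0; 1; 3; 2; 4]). Qed.
Definition pV1 : 'S_5 := perm injV1.
Lemma injV2 : injective (mkf [:: 1; 0; 2; 3; 4]).
Proof. by apply: (@mkf_inj _ [:: 1; 0; 2; 3; 4]). Qed.
Definition pV2 : 'S_5 := perm injV2.
Lemma injV3 : injective (mkf [:: 1; 0; 3; 2; 4]).
Proof. by apply: (@mkf_inj _ [:: 1; 0; 3; 2; 4]). Qed.
Definition pV3 : 'S_5 := perm injV3.
Definition Vl : seq 'S_5 := [:: pV0; pV1; pV2; pV3].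
Definition Vtl : seq (seq nat) := [:: [:: 0; 1; 2; 3; 4]; [:: 0; 1; 3; 2; 4]; [:: 1; 0; 2; 3; 4]; [:: 1; 0; 3; 2; 4]].


Definition tup (p : 'S_5) : seq nat :=
  [:: val (p o0); val (p o1); val (p o2); val (p o3); val (p o4)].

Lemma tup_inj : injective tup.
Proof.
move=> p q E; case: E => E0 E1 E2 E3 E4; apply/permP => i; apply: val_inj.
case: i => [[|[|[|[|[|m]]]]] Hi] //.
- by rewrite (_ : Ordinal Hi = o0) //; apply: val_inj.
- by rewrite (_ : Ordinal Hi = o1) //; apply: val_inj.
- by rewrite (_ : Ordinal Hi = o2) //; apply: val_inj.
- by rewrite (_ : Ordinal Hi = o3) //; apply: val_inj.
- by rewrite (_ : Ordinal Hi = o4) //; apply: val_inj.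
Qed.

Lemma tup_mem (L : seq 'S_5) (TL : seq (seq nat)) p :
  TL = map tup L -> tup p \in TL -> p \in L.
Proof. by move=> -> /mapP[q qL /tup_inj ->]. Qed.

Lemma tupD (p : 'S_5) (i j : 'I_5) : i != j -> val (p i) != val (p j).
Proof. by rewrite (inj_eq val_inj) (inj_eq (@perm_inj _ p)). Qed.

Lemma presV_of (bl : seq (seq nat)) (p : 'S_5) : preserves bl (p^-1)%g ->
  forall (b : seq nat) (j : 'I_5), b \in bl -> (p j).+1 \in b -> j.+1 \in b.
Proof.
move=> /allP Hb b j bin; have /forallP F := Hb b bin.
by move: (F (p j)); rewrite permK => /implyP.
Qed.

Lemma presV_to (bl : seq (seq nat)) (p : 'S_5) :
  (forall (b : seq nat) (j : 'I_5), b \in bl -> (p j).+1 \in b -> j.+1 \in b) -> preserves bl (p^-1)%g.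
Proof.
move=> H; apply/allP => b bin; apply/forallP => i; apply/implyP.
rewrite -{1}(permKV p i) => Hi; exact: H bin Hi.
Qed.

Lemma notin_of (bl : seq (seq nat)) (p : 'S_5)
  (C : forall (b : seq nat) (j : 'I_5), b \in bl -> (p j).+1 \in b -> j.+1 \in b) (b : seq nat) (j : 'I_5) :
  b \in bl -> j.+1 \notin b -> (p j).+1 \notin b.
Proof. by move=> bin nb; apply/negP => /(C _ _ bin); apply/negP. Qed.

Definition chkp (bl : seq (seq nat)) (s : seq nat) :=
  all (fun x => x < 5)%N s &&
  all (fun b => all (fun j => ((nth 0%N s j).+1 \in b) ==> (j.+1 \in b)) (iota 0 5)) bl.

Lemma chkp_pres bl s (H : injective (mkf s)) : chkp bl s -> preserves bl ((perm H)^-1)%g.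
Proof.
case/andP => /allP A /allP B; apply: presV_to => b j bin.
have L : (nth 0%N s j < 5)%N.
  case: (ltnP j (size s)) => [jl|jl]; first exact: A _ (mem_nth 0%N jl).
  by rewrite nth_default.
rewrite permE /mkf ordkK //.
have /allP B1 := B b bin.
have Hj : (nat_of_ord j \in iota 0 5) by rewrite mem_iota ltn_ord.
by move: (B1 _ Hj) => /implyP.
Qed.

Lemma tupHl : Htl = map tup Hl.
Proof. by rewrite /Hl /= /tup /pH0 /pH1 /pH2 /pH3 /pH4 /pH5 /pH6 /pH7 /pH8 /pH9 /pH10 /pH11 !permE. Qed.
Lemma allH (P : 'S_5 -> Prop) : P pH0 -> P pH1 -> P pH2 -> P pH3 -> P pH4 -> P pH5 -> P pH6 -> P pH7 -> P pH8 -> P pH9 -> P pH10 -> P pH11 ->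
  forall p, p \in Hl -> P p.
Proof.
move=> h0 h1 h2 h3 h4 h5 h6 h7 h8 h9 h10 h11 p; rewrite /Hl !inE.
do ![case/orP=> [/eqP->|] //]; by move/eqP->.
Qed.
Lemma uniqHl : uniq Hl.
Proof. by rewrite -(map_inj_uniq tup_inj) -tupHl. Qed.
Lemma tupVl : Vtl = map tup Vl.
Proof. by rewrite /Vl /= /tup /pV0 /pV1 /pV2 /pV3 !permE. Qed.
Lemma allV (P : 'S_5 -> Prop) : P pV0 -> P pV1 -> P pV2 -> P pV3 ->
  forall p, p \in Vl -> P p.
Proof.
move=> h0 h1 h2 h3 p; rewrite /Vl !inE.
do ![case/orP=> [/eqP->|] //]; by move/eqP->.
Qed.
Lemma uniqVl : uniq Vl.
Proof. by rewrite -(map_inj_uniq tup_inj) -tupVl. Qed.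

Lemma chkH (a0 a1 a2 a3 a4 : nat) :
  (a0 < 5)%N ->
  (a0.+1 \notin [:: 2; 4]) ->
  (a1 < 5)%N ->
  (a1.+1 \notin [:: 1; 3; 5]) ->
  (a1 != a0) ->
  (a2 < 5)%N ->
  (a2.+1 \notin [:: 2; 4]) ->
  (a2 != a0) ->
  (a2 != a1) ->
  (a3 < 5)%N ->
  (a3.+1 \notin [:: 1; 3; 5]) ->
  (a3 != a0) ->
  (a3 != a1) ->
  (a3 != a2) ->
  (a4 < 5)%N ->
  (a4.+1 \notin [:: 2; 4]) ->
  (a4 != a0) ->
  (a4 != a1) ->
  (a4 != a2) ->
  (a4 != a3) ->
  [:: a0; a1; a2; a3; a4] \in Htl.
Proof.
case: a0 => [|[|[|[|[|a0]]]]] //; case: a1 => [|[|[|[|[|a1]]]]] //; case: a2 => [|[|[|[|[|a2]]]]] //; case: a3 => [|[|[|[|[|a3]]]]] //; case: a4 => [|[|[|[|[|a4]]]]] //.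
Qed.
Lemma memH (p : 'S_5) : (p^-1)%g \in Hset t' = (p \in Hl).
Proof.
rewrite inE; apply/idP/idP.
- move=> Hp; have C := presV_of Hp.
  apply: (tup_mem tupHl); apply: chkH
   (ltn_ord _)
   (notin_of C (b := [:: 2; 4]) (j := o0) isT isT)
   (ltn_ord _)
   (notin_of C (b := [:: 1; 3; 5]) (j := o1) isT isT)
   (tupD p (i:=o1) (j:=o0) isT)
   (ltn_ord _)
   (notin_of C (b := [:: 2; 4]) (j := o2) isT isT)
   (tupD p (i:=o2) (j:=o0) isT)
   (tupD p (i:=o2) (j:=o1) isT)
   (ltn_ord _)
   (notin_of C (b := [:: 1; 3; 5]) (j := o3) isT isT)
   (tupD p (i:=o3) (j:=o0) isT)
   (tupD p (i:=o3) (j:=o1) isT)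
   (tupD p (i:=o3) (j:=o2) isT)
   (ltn_ord _)
   (notin_of C (b := [:: 2; 4]) (j := o4) isT isT)
   (tupD p (i:=o4) (j:=o0) isT)
   (tupD p (i:=o4) (j:=o1) isT)
   (tupD p (i:=o4) (j:=o2) isT)
   (tupD p (i:=o4) (j:=o3) isT).
- move: p; apply: allH; by apply: chkp_pres.
Qed.

Lemma chkV (a0 a1 a2 a3 a4 : nat) :
  (a0 < 5)%N ->
  (a0.+1 \notin [:: 3; 4]) ->
  (a0.+1 \notin [:: 5]) ->
  (a1 < 5)%N ->
  (a1.+1 \notin [:: 3; 4]) ->
  (a1.+1 \notin [:: 5]) ->
  (a1 != a0) ->
  (a2 < 5)%N ->
  (a2.+1 \notin [:: 1; 2]) ->
  (a2.+1 \notin [:: 5]) ->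
  (a2 != a0) ->
  (a2 != a1) ->
  (a3 < 5)%N ->
  (a3.+1 \notin [:: 1; 2]) ->
  (a3.+1 \notin [:: 5]) ->
  (a3 != a0) ->
  (a3 != a1) ->
  (a3 != a2) ->
  (a4 < 5)%N ->
  (a4.+1 \notin [:: 1; 2]) ->
  (a4.+1 \notin [:: 3; 4]) ->
  (a4 != a0) ->
  (a4 != a1) ->
  (a4 != a2) ->
  (a4 != a3) ->
  [:: a0; a1; a2; a3; a4] \in Vtl.
Proof.
case: a0 => [|[|[|[|[|a0]]]]] //; case: a1 => [|[|[|[|[|a1]]]]] //; case: a2 => [|[|[|[|[|a2]]]]] //; case: a3 => [|[|[|[|[|a3]]]]] //; case: a4 => [|[|[|[|[|a4]]]]] //.
Qed.
Lemma memV (p : 'S_5) : (p^-1)%g \in Vset t' = (p \in Vl).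
Proof.
rewrite inE; apply/idP/idP.
- move=> Hp; have C := presV_of Hp.
  apply: (tup_mem tupVl); apply: chkV
   (ltn_ord _)
   (notin_of C (b := [:: 3; 4]) (j := o0) isT isT)
   (notin_of C (b := [:: 5]) (j := o0) isT isT)
   (ltn_ord _)
   (notin_of C (b := [:: 3; 4]) (j := o1) isT isT)
   (notin_of C (b := [:: 5]) (j := o1) isT isT)
   (tupD p (i:=o1) (j:=o0) isT)
   (ltn_ord _)
   (notin_of C (b := [:: 1; 2]) (j := o2) isT isT)
   (notin_of C (b := [:: 5]) (j := o2) isT isT)
   (tupD p (i:=o2) (j:=o0) isT)
   (tupD p (i:=o2) (j:=o1) isT)
   (ltn_ord _)
   (notin_of C (b := [:: 1; 2]) (j := o3) isT isT)
   (notin_of C (b := [:: 5]) (j := o3) isT isT)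
   (tupD p (i:=o3) (j:=o0) isT)
   (tupD p (i:=o3) (j:=o1) isT)
   (tupD p (i:=o3) (j:=o2) isT)
   (ltn_ord _)
   (notin_of C (b := [:: 1; 2]) (j := o4) isT isT)
   (notin_of C (b := [:: 3; 4]) (j := o4) isT isT)
   (tupD p (i:=o4) (j:=o0) isT)
   (tupD p (i:=o4) (j:=o1) isT)
   (tupD p (i:=o4) (j:=o2) isT)
   (tupD p (i:=o4) (j:=o3) isT).
- move: p; apply: allV; by apply: chkp_pres.
Qed.



Lemma sumHV (K : comNzRingType) (G : ('I_5 -> 'I_5) -> K) :
  \sum_(p in Hset t') \sum_(q in Vset t')
     (-1) ^+ odd_perm q * G (fun i => (q^-1)%g ((p^-1)%g i))
  = \sum_(p <- Hl) \sum_(q <- Vl) (-1) ^+ odd_perm q * G (fun i => q (p i)).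
Proof.
rewrite (reindex_inj invg_inj) /=.
rewrite (eq_bigl (fun p => p \in Hl)); last by move=> p; exact: memH.
rewrite -big_uniq ?uniqHl //; apply: eq_bigr => p _.
rewrite (reindex_inj invg_inj) /=.
rewrite (eq_bigl (fun q => q \in Vl)); last by move=> q; exact: memV.
rewrite -big_uniq ?uniqVl //; apply: eq_bigr => q _.
by rewrite odd_permV !invgK.
Qed.

Lemma oddV0 : odd_perm pV0 = false.
Proof.
have -> : pV0 = (tperm o0 o1 * tperm o0 o1)%g.
  apply: tup_inj; rewrite /tup ?permM; do 2!rewrite ?tpermL ?tpermR.
  rewrite ?tpermD //.
  by rewrite /pV0 !permE.
by rewrite odd_permM !odd_tperm.
Qed.
Lemma oddV1 : odd_perm pV1 = true.
Proof.
have -> : pV1 = tperm o2 o3.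
  apply: tup_inj; rewrite /tup ?permM; do 2!rewrite ?tpermL ?tpermR.
  rewrite ?tpermD //.
  by rewrite /pV1 !permE.
by rewrite odd_tperm.
Qed.
Lemma oddV2 : odd_perm pV2 = true.
Proof.
have -> : pV2 = tperm o0 o1.
  apply: tup_inj; rewrite /tup ?permM; do 2!rewrite ?tpermL ?tpermR.
  rewrite ?tpermD //.
  by rewrite /pV2 !permE.
by rewrite odd_tperm.
Qed.
Lemma oddV3 : odd_perm pV3 = false.
Proof.
have -> : pV3 = (pV1 * pV2)%g.
  by apply: tup_inj; rewrite /tup !permM /pV1 /pV2 /pV3 !permE.
by rewrite odd_permM oddV1 oddV2.
Qed.

Definition n2 (a b : nat) := if Nat.leb a b then (a, b) else (b, a).
Definition s3 (a b c : nat) :=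
  if Nat.leb a b then
    (if Nat.leb b c then (a, b, c) else if Nat.leb a c then (a, c, b) else (c, a, b))
  else (if Nat.leb a c then (b, a, c) else if Nat.leb b c then (b, c, a) else (c, b, a)).



Definition tupf (r : 'I_5 -> 'I_5) : seq nat :=
  [:: val (r o0); val (r o1); val (r o2); val (r o3); val (r o4)].
Definition comp (t u : seq nat) : seq nat := [seq nth 0%N u k | k <- t].

Lemma tup_nth (q : 'S_5) (i : 'I_5) : val (q i) = nth 0%N (tup q) i.
Proof.
case: i => [[|[|[|[|[|m]]]]] Hi] //.
- by rewrite (_ : Ordinal Hi = o0) //; apply: val_inj.
- by rewrite (_ : Ordinal Hi = o1) //; apply: val_inj.
- by rewrite (_ : Ordinal Hi = o2) //; apply: val_inj.
- by rewrite (_ : Ordinal Hi = o3) //; apply: val_inj.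
- by rewrite (_ : Ordinal Hi = o4) //; apply: val_inj.
Qed.

Lemma tupfM (p q : 'S_5) : tupf (fun i => q (p i)) = comp (tup p) (tup q).
Proof. by rewrite /tupf /comp /tup /= !tup_nth. Qed.

Lemma sum_expand (K : comNzRingType) (g : seq nat -> K) :
  \sum_(p <- Hl) \sum_(q <- Vl) (-1) ^+ odd_perm q * g (tupf (fun i => q (p i)))
  = \sum_(t <- Htl) (g (comp t [:: 0; 1; 2; 3; 4]%N) - g (comp t [:: 0; 1; 3; 2; 4]%N)
                     - g (comp t [:: 1; 0; 2; 3; 4]%N) + g (comp t [:: 1; 0; 3; 2; 4]%N)).
Proof.
rewrite tupHl big_map; apply: eq_bigr => p _.
rewrite /Vl !big_cons big_nil oddV0 oddV1 oddV2 oddV3 !tupfM.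
have -> : tup pV0 = [:: 0; 1; 2; 3; 4]%N by rewrite /tup /pV0 !permE.
have -> : tup pV1 = [:: 0; 1; 3; 2; 4]%N by rewrite /tup /pV1 !permE.
have -> : tup pV2 = [:: 1; 0; 2; 3; 4]%N by rewrite /tup /pV2 !permE.
have -> : tup pV3 = [:: 1; 0; 3; 2; 4]%N by rewrite /tup /pV3 !permE.
rewrite /= expr0 expr1 addr0; ring.
Qed.

Section Core.
Variable K : comNzRingType.
Variables (f2 : nat -> nat -> K) (f3 : nat -> nat -> nat -> K).
Hypothesis f2C : forall a b, f2 a b = f2 b a.
Hypothesis f3C1 : forall a b c, f3 a b c = f3 b a c.
Hypothesis f3C2 : forall a b c, f3 a b c = f3 a c b.

Definition f2n a b := f2 (n2 a b).1 (n2 a b).2.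
Definition f3n a b c := f3 (s3 a b c).1.1 (s3 a b c).1.2 (s3 a b c).2.

Lemma f2N a b : f2 a b = f2n a b.
Proof. by rewrite /f2n /n2; case: Nat.leb. Qed.

Lemma f3N a b c : f3 a b c = f3n a b c.
Proof.
rewrite /f3n /s3; case: Nat.leb; case: Nat.leb; try case: Nat.leb => //=.
all: try by rewrite f3C2.
all: try by rewrite f3C1.
all: try by rewrite f3C2 f3C1.
all: try by rewrite f3C1 f3C2.
all: by rewrite f3C1 f3C2 f3C1.
Qed.

Definition g23 (t : seq nat) := f2 (nth 0%N t 0) (nth 0%N t 1) * f3 (nth 0%N t 2) (nth 0%N t 3) (nth 0%N t 4).
Definition g32 (t : seq nat) := f3 (nth 0%N t 0) (nth 0%N t 1) (nth 0%N t 2) * f2 (nth 0%N t 3) (nth 0%N t 4).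
Definition RHS := 4%:R * (f2 0 3 * f3 1 2 4 - f2 1 3 * f3 0 2 4
                     + f2 1 2 * f3 0 3 4 - f2 0 2 * f3 1 3 4).

Lemma core23 :
  \sum_(p in Hset t') \sum_(q in Vset t') (-1) ^+ odd_perm q *
    (f2 ((q^-1)%g ((p^-1)%g o0)) ((q^-1)%g ((p^-1)%g o1)) *
     f3 ((q^-1)%g ((p^-1)%g o2)) ((q^-1)%g ((p^-1)%g o3)) ((q^-1)%g ((p^-1)%g o4)))
  = RHS.
Proof.
rewrite (sumHV (fun r => g23 (tupf r))).
rewrite sum_expand /Htl /g23 !big_cons big_nil /=.
rewrite !f2N !f3N /f2n /f3n /RHS /=.
ring.
Qed.

Lemma core32 :
  \sum_(p in Hset t') \sum_(q in Vset t') (-1) ^+ odd_perm q *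
    (f3 ((q^-1)%g ((p^-1)%g o0)) ((q^-1)%g ((p^-1)%g o1)) ((q^-1)%g ((p^-1)%g o2)) *
     f2 ((q^-1)%g ((p^-1)%g o3)) ((q^-1)%g ((p^-1)%g o4)))
  = RHS.
Proof.
rewrite (sumHV (fun r => g32 (tupf r))).
rewrite sum_expand /Htl /g32 !big_cons big_nil /=.
rewrite !f2N !f3N /f2n /f3n /RHS /=.
ring.
Qed.
Definition Fn a b c d e := 4%:R * (f2 a d * f3 b c e - f2 b d * f3 a c e
                     + f2 b c * f3 a d e - f2 a c * f3 b d e).
Lemma Fn1 : Fn 0 1 2 3 4 = - Fn 0 1 3 2 4.
Proof. rewrite /Fn !f2N !f3N /f2n /f3n /=; ring. Qed.
Lemma Fn2 : Fn 0 1 2 3 4 = Fn 2 3 0 1 4.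
Proof. rewrite /Fn !f2N !f3N /f2n /f3n /=; ring. Qed.
Lemma Fn3 : Fn 0 1 2 3 4 + Fn 0 2 3 1 4 + Fn 0 3 1 2 4 = 0.
Proof. rewrite /Fn !f2N !f3N /f2n /f3n /=; ring. Qed.
Lemma Fn4 : Fn 0 1 2 3 4 + Fn 0 1 3 4 2 + Fn 0 1 4 2 3 = 0.
Proof. rewrite /Fn !f2N !f3N /f2n /f3n /=; ring. Qed.
End Core.

Section Cert.
Variables (A : Type) (K : comNzRingType) (R5 : A -> A -> A -> A -> A -> K).
Hypothesis h1 : forall u w x y z, R5 w x y z u = - R5 w x z y u.
Hypothesis h2 : forall u w x y z, R5 w x y z u = R5 y z w x u.
Hypothesis h3 : forall u w x y z, R5 w x y z u + R5 w y z x u + R5 w z x y u = 0.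
Hypothesis h4 : forall u w x y z, R5 w x y z u + R5 w x z u y + R5 w x u y z = 0.
Definition sym6 (F : A -> A -> A -> K) x y z :=
  F x y z + F x z y + F y x z + F y z x + F z x y + F z y x.
Definition Xp p q r s t :=
  sym6 (fun x y z => R5 p x q y z) r s t + sym6 (fun x y z => R5 q x p y z) r s t.
Lemma cert v0 v1 v2 v3 v4 :
  4%:R * (Xp v0 v3 v1 v2 v4 - Xp v1 v3 v0 v2 v4 + Xp v1 v2 v0 v3 v4 - Xp v0 v2 v1 v3 v4)
  = - 96%:R * R5 v0 v1 v2 v3 v4.
Proof.
have e0 : (R5 v0 v1 v2 v3 v4 + R5 v0 v1 v3 v2 v4) = 0 by rewrite (h1 v4 v0 v1 v2 v3) addNr.
have e1 : (R5 v0 v1 v2 v3 v4 - R5 v2 v3 v0 v1 v4) = 0 by rewrite (h2 v4 v0 v1 v2 v3) subrr.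
have e2 : (R5 v0 v1 v2 v3 v4 + R5 v0 v2 v3 v1 v4 + R5 v0 v3 v1 v2 v4) = 0 := (h3 v4 v0 v1 v2 v3).
have e3 : (R5 v0 v1 v2 v3 v4 + R5 v0 v1 v3 v4 v2 + R5 v0 v1 v4 v2 v3) = 0 := (h4 v4 v0 v1 v2 v3).
have e4 : (R5 v0 v1 v2 v4 v3 + R5 v0 v1 v4 v2 v3) = 0 by rewrite (h1 v3 v0 v1 v2 v4) addNr.
have e5 : (R5 v0 v1 v2 v4 v3 - R5 v2 v4 v0 v1 v3) = 0 by rewrite (h2 v3 v0 v1 v2 v4) subrr.
have e6 : (R5 v0 v1 v2 v4 v3 + R5 v0 v2 v4 v1 v3 + R5 v0 v4 v1 v2 v3) = 0 := (h3 v3 v0 v1 v2 v4).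
have e7 : (R5 v0 v1 v2 v4 v3 + R5 v0 v1 v4 v3 v2 + R5 v0 v1 v3 v2 v4) = 0 := (h4 v3 v0 v1 v2 v4).
have e8 : (R5 v0 v1 v3 v2 v4 - R5 v3 v2 v0 v1 v4) = 0 by rewrite (h2 v4 v0 v1 v3 v2) subrr.
have e9 : (R5 v0 v1 v3 v2 v4 + R5 v0 v3 v2 v1 v4 + R5 v0 v2 v1 v3 v4) = 0 := (h3 v4 v0 v1 v3 v2).
have e10 : (R5 v0 v1 v3 v4 v2 - R5 v3 v4 v0 v1 v2) = 0 by rewrite (h2 v2 v0 v1 v3 v4) subrr.
have e11 : (R5 v0 v1 v3 v4 v2 + R5 v0 v3 v4 v1 v2 + R5 v0 v4 v1 v3 v2) = 0 := (h3 v2 v0 v1 v3 v4).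
have e12 : (R5 v0 v1 v4 v2 v3 + R5 v0 v4 v2 v1 v3 + R5 v0 v2 v1 v4 v3) = 0 := (h3 v3 v0 v1 v4 v2).
have e13 : (R5 v0 v1 v4 v3 v2 + R5 v0 v4 v3 v1 v2 + R5 v0 v3 v1 v4 v2) = 0 := (h3 v2 v0 v1 v4 v3).
have e14 : (R5 v0 v2 v1 v3 v4 + R5 v0 v2 v3 v1 v4) = 0 by rewrite (h1 v4 v0 v2 v1 v3) addNr.
have e15 : (R5 v0 v2 v1 v3 v4 - R5 v1 v3 v0 v2 v4) = 0 by rewrite (h2 v4 v0 v2 v1 v3) subrr.
have e16 : (R5 v0 v2 v1 v3 v4 + R5 v0 v2 v3 v4 v1 + R5 v0 v2 v4 v1 v3) = 0 := (h4 v4 v0 v2 v1 v3).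
have e17 : (R5 v0 v2 v1 v4 v3 - R5 v1 v4 v0 v2 v3) = 0 by rewrite (h2 v3 v0 v2 v1 v4) subrr.
have e18 : (R5 v0 v2 v1 v4 v3 + R5 v0 v2 v4 v3 v1 + R5 v0 v2 v3 v1 v4) = 0 := (h4 v3 v0 v2 v1 v4).
have e19 : (R5 v0 v2 v3 v1 v4 - R5 v3 v1 v0 v2 v4) = 0 by rewrite (h2 v4 v0 v2 v3 v1) subrr.
have e20 : (R5 v0 v2 v3 v4 v1 - R5 v3 v4 v0 v2 v1) = 0 by rewrite (h2 v1 v0 v2 v3 v4) subrr.
have e21 : (R5 v0 v2 v3 v4 v1 + R5 v0 v3 v4 v2 v1 + R5 v0 v4 v2 v3 v1) = 0 := (h3 v1 v0 v2 v3 v4).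
have e22 : (R5 v0 v2 v4 v3 v1 + R5 v0 v4 v3 v2 v1 + R5 v0 v3 v2 v4 v1) = 0 := (h3 v1 v0 v2 v4 v3).
have e23 : (R5 v0 v3 v1 v2 v4 - R5 v1 v2 v0 v3 v4) = 0 by rewrite (h2 v4 v0 v3 v1 v2) subrr.
have e24 : (R5 v0 v3 v1 v2 v4 + R5 v0 v3 v2 v4 v1 + R5 v0 v3 v4 v1 v2) = 0 := (h4 v4 v0 v3 v1 v2).
have e25 : (R5 v0 v3 v1 v4 v2 - R5 v1 v4 v0 v3 v2) = 0 by rewrite (h2 v2 v0 v3 v1 v4) subrr.
have e26 : (R5 v0 v3 v1 v4 v2 + R5 v0 v3 v4 v2 v1 + R5 v0 v3 v2 v1 v4) = 0 := (h4 v2 v0 v3 v1 v4).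
have e27 : (R5 v0 v3 v2 v1 v4 - R5 v2 v1 v0 v3 v4) = 0 by rewrite (h2 v4 v0 v3 v2 v1) subrr.
have e28 : (R5 v0 v3 v2 v4 v1 - R5 v2 v4 v0 v3 v1) = 0 by rewrite (h2 v1 v0 v3 v2 v4) subrr.
have e29 : (R5 v0 v4 v1 v2 v3 - R5 v1 v2 v0 v4 v3) = 0 by rewrite (h2 v3 v0 v4 v1 v2) subrr.
have e30 : (R5 v0 v4 v1 v3 v2 - R5 v1 v3 v0 v4 v2) = 0 by rewrite (h2 v2 v0 v4 v1 v3) subrr.
have e31 : (R5 v0 v4 v2 v1 v3 - R5 v2 v1 v0 v4 v3) = 0 by rewrite (h2 v3 v0 v4 v2 v1) subrr.
have e32 : (R5 v0 v4 v2 v3 v1 - R5 v2 v3 v0 v4 v1) = 0 by rewrite (h2 v1 v0 v4 v2 v3) subrr.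
have e33 : (R5 v0 v4 v3 v1 v2 - R5 v3 v1 v0 v4 v2) = 0 by rewrite (h2 v2 v0 v4 v3 v1) subrr.
have e34 : (R5 v0 v4 v3 v2 v1 - R5 v3 v2 v0 v4 v1) = 0 by rewrite (h2 v1 v0 v4 v3 v2) subrr.
have e35 : (R5 v1 v0 v2 v3 v4 + R5 v1 v0 v3 v2 v4) = 0 by rewrite (h1 v4 v1 v0 v2 v3) addNr.
have e36 : (R5 v1 v0 v2 v3 v4 - R5 v2 v3 v1 v0 v4) = 0 by rewrite (h2 v4 v1 v0 v2 v3) subrr.
have e37 : (R5 v1 v0 v2 v3 v4 + R5 v1 v2 v3 v0 v4 + R5 v1 v3 v0 v2 v4) = 0 := (h3 v4 v1 v0 v2 v3).
have e38 : (R5 v1 v0 v2 v3 v4 + R5 v1 v0 v3 v4 v2 + R5 v1 v0 v4 v2 v3) = 0 := (h4 v4 v1 v0 v2 v3).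
have e39 : (R5 v1 v0 v2 v4 v3 + R5 v1 v0 v4 v2 v3) = 0 by rewrite (h1 v3 v1 v0 v2 v4) addNr.
have e40 : (R5 v1 v0 v2 v4 v3 - R5 v2 v4 v1 v0 v3) = 0 by rewrite (h2 v3 v1 v0 v2 v4) subrr.
have e41 : (R5 v1 v0 v2 v4 v3 + R5 v1 v2 v4 v0 v3 + R5 v1 v4 v0 v2 v3) = 0 := (h3 v3 v1 v0 v2 v4).
have e42 : (R5 v1 v0 v2 v4 v3 + R5 v1 v0 v4 v3 v2 + R5 v1 v0 v3 v2 v4) = 0 := (h4 v3 v1 v0 v2 v4).
have e43 : (R5 v1 v0 v3 v2 v4 - R5 v3 v2 v1 v0 v4) = 0 by rewrite (h2 v4 v1 v0 v3 v2) subrr.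
have e44 : (R5 v1 v0 v3 v2 v4 + R5 v1 v3 v2 v0 v4 + R5 v1 v2 v0 v3 v4) = 0 := (h3 v4 v1 v0 v3 v2).
have e45 : (R5 v1 v0 v3 v4 v2 - R5 v3 v4 v1 v0 v2) = 0 by rewrite (h2 v2 v1 v0 v3 v4) subrr.
have e46 : (R5 v1 v0 v3 v4 v2 + R5 v1 v3 v4 v0 v2 + R5 v1 v4 v0 v3 v2) = 0 := (h3 v2 v1 v0 v3 v4).
have e47 : (R5 v1 v0 v4 v2 v3 + R5 v1 v4 v2 v0 v3 + R5 v1 v2 v0 v4 v3) = 0 := (h3 v3 v1 v0 v4 v2).
have e48 : (R5 v1 v0 v4 v3 v2 + R5 v1 v4 v3 v0 v2 + R5 v1 v3 v0 v4 v2) = 0 := (h3 v2 v1 v0 v4 v3).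
have e49 : (R5 v1 v2 v0 v3 v4 + R5 v1 v2 v3 v0 v4) = 0 by rewrite (h1 v4 v1 v2 v0 v3) addNr.
have e50 : (R5 v1 v2 v0 v3 v4 + R5 v1 v2 v3 v4 v0 + R5 v1 v2 v4 v0 v3) = 0 := (h4 v4 v1 v2 v0 v3).
have e51 : (R5 v1 v2 v0 v4 v3 + R5 v1 v2 v4 v3 v0 + R5 v1 v2 v3 v0 v4) = 0 := (h4 v3 v1 v2 v0 v4).
have e52 : (R5 v1 v2 v3 v0 v4 - R5 v3 v0 v1 v2 v4) = 0 by rewrite (h2 v4 v1 v2 v3 v0) subrr.
have e53 : (R5 v1 v2 v3 v4 v0 - R5 v3 v4 v1 v2 v0) = 0 by rewrite (h2 v0 v1 v2 v3 v4) subrr.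
have e54 : (R5 v1 v2 v3 v4 v0 + R5 v1 v3 v4 v2 v0 + R5 v1 v4 v2 v3 v0) = 0 := (h3 v0 v1 v2 v3 v4).
have e55 : (R5 v1 v2 v4 v3 v0 + R5 v1 v4 v3 v2 v0 + R5 v1 v3 v2 v4 v0) = 0 := (h3 v0 v1 v2 v4 v3).
have e56 : (R5 v1 v3 v0 v2 v4 + R5 v1 v3 v2 v4 v0 + R5 v1 v3 v4 v0 v2) = 0 := (h4 v4 v1 v3 v0 v2).
have e57 : (R5 v1 v3 v0 v4 v2 + R5 v1 v3 v4 v2 v0 + R5 v1 v3 v2 v0 v4) = 0 := (h4 v2 v1 v3 v0 v4).
have e58 : (R5 v1 v3 v2 v0 v4 - R5 v2 v0 v1 v3 v4) = 0 by rewrite (h2 v4 v1 v3 v2 v0) subrr.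
have e59 : (R5 v1 v3 v2 v4 v0 - R5 v2 v4 v1 v3 v0) = 0 by rewrite (h2 v0 v1 v3 v2 v4) subrr.
have e60 : (R5 v1 v4 v2 v0 v3 - R5 v2 v0 v1 v4 v3) = 0 by rewrite (h2 v3 v1 v4 v2 v0) subrr.
have e61 : (R5 v1 v4 v2 v3 v0 - R5 v2 v3 v1 v4 v0) = 0 by rewrite (h2 v0 v1 v4 v2 v3) subrr.
have e62 : (R5 v1 v4 v3 v0 v2 - R5 v3 v0 v1 v4 v2) = 0 by rewrite (h2 v2 v1 v4 v3 v0) subrr.
have e63 : (R5 v1 v4 v3 v2 v0 - R5 v3 v2 v1 v4 v0) = 0 by rewrite (h2 v0 v1 v4 v3 v2) subrr.
apply/eqP; rewrite -subr_eq0; apply/eqP.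
transitivity (32%:R * (R5 v0 v1 v2 v3 v4 + R5 v0 v1 v3 v2 v4) + 4%:R * (R5 v0 v1 v2 v3 v4 - R5 v2 v3 v0 v1 v4) + 64%:R * (R5 v0 v1 v2 v3 v4 + R5 v0 v2 v3 v1 v4 + R5 v0 v3 v1 v2 v4) + (- 8%:R) * (R5 v0 v1 v2 v3 v4 + R5 v0 v1 v3 v4 v2 + R5 v0 v1 v4 v2 v3) + 16%:R * (R5 v0 v1 v2 v4 v3 + R5 v0 v1 v4 v2 v3) + 4%:R * (R5 v0 v1 v2 v4 v3 - R5 v2 v4 v0 v1 v3) + (- 16%:R) * (R5 v0 v1 v2 v4 v3 + R5 v0 v2 v4 v1 v3 + R5 v0 v4 v1 v2 v3) + (- 8%:R) * (R5 v0 v1 v2 v4 v3 + R5 v0 v1 v4 v3 v2 + R5 v0 v1 v3 v2 v4) + (- 4%:R) * (R5 v0 v1 v3 v2 v4 - R5 v3 v2 v0 v1 v4) + (- 16%:R) * (R5 v0 v1 v3 v2 v4 + R5 v0 v3 v2 v1 v4 + R5 v0 v2 v1 v3 v4) + (- 4%:R) * (R5 v0 v1 v3 v4 v2 - R5 v3 v4 v0 v1 v2) + 16%:R * (R5 v0 v1 v3 v4 v2 + R5 v0 v3 v4 v1 v2 + R5 v0 v4 v1 v3 v2) + (- 8%:R) * (R5 v0 v1 v4 v2 v3 + R5 v0 v4 v2 v1 v3 + R5 v0 v2 v1 v4 v3) + 8%:R * (R5 v0 v1 v4 v3 v2 + R5 v0 v4 v3 v1 v2 + R5 v0 v3 v1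 v4 v2) + (- 48%:R) * (R5 v0 v2 v1 v3 v4 + R5 v0 v2 v3 v1 v4) + 48%:R * (R5 v0 v2 v1 v3 v4 - R5 v1 v3 v0 v2 v4) + 16%:R * (R5 v0 v2 v1 v3 v4 + R5 v0 v2 v3 v4 v1 + R5 v0 v2 v4 v1 v3) + 16%:R * (R5 v0 v2 v1 v4 v3 - R5 v1 v4 v0 v2 v3) + (- 8%:R) * (R5 v0 v2 v1 v4 v3 + R5 v0 v2 v4 v3 v1 + R5 v0 v2 v3 v1 v4) + (- 4%:R) * (R5 v0 v2 v3 v1 v4 - R5 v3 v1 v0 v2 v4) + (- 4%:R) * (R5 v0 v2 v3 v4 v1 - R5 v3 v4 v0 v2 v1) + (- 8%:R) * (R5 v0 v2 v3 v4 v1 + R5 v0 v3 v4 v2 v1 + R5 v0 v4 v2 v3 v1) + 8%:R * (R5 v0 v2 v4 v3 v1 + R5 v0 v4 v3 v2 v1 + R5 v0 v3 v2 v4 v1) + (- 48%:R) * (R5 v0 v3 v1 v2 v4 - R5 v1 v2 v0 v3 v4) + (- 16%:R) * (R5 v0 v3 v1 v2 v4 + R5 v0 v3 v2 v4 v1 + R5 v0 v3 v4 v1 v2) + (- 16%:R) * (R5 v0 v3 v1 v4 v2 - R5 v1 v4 v0 v3 v2) + 8%:R * (R5 v0 v3 v1 v4 v2 + R5 v0 v3 v4 v2 v1 + R5 v0 v3 v2 v1 v4) + 4%:R * (R5 v0 v3 v2 v1 v4 - R5 v2 v1 v0 v3 v4) + 4%:R * (R5 v0 v3 v2 v4 v1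 - R5 v2 v4 v0 v3 v1) + 16%:R * (R5 v0 v4 v1 v2 v3 - R5 v1 v2 v0 v4 v3) + (- 16%:R) * (R5 v0 v4 v1 v3 v2 - R5 v1 v3 v0 v4 v2) + 4%:R * (R5 v0 v4 v2 v1 v3 - R5 v2 v1 v0 v4 v3) + 4%:R * (R5 v0 v4 v2 v3 v1 - R5 v2 v3 v0 v4 v1) + (- 4%:R) * (R5 v0 v4 v3 v1 v2 - R5 v3 v1 v0 v4 v2) + (- 4%:R) * (R5 v0 v4 v3 v2 v1 - R5 v3 v2 v0 v4 v1) + (- 32%:R) * (R5 v1 v0 v2 v3 v4 + R5 v1 v0 v3 v2 v4) + (- 4%:R) * (R5 v1 v0 v2 v3 v4 - R5 v2 v3 v1 v0 v4) + 32%:R * (R5 v1 v0 v2 v3 v4 + R5 v1 v2 v3 v0 v4 + R5 v1 v3 v0 v2 v4) + 8%:R * (R5 v1 v0 v2 v3 v4 + R5 v1 v0 v3 v4 v2 + R5 v1 v0 v4 v2 v3) + (- 16%:R) * (R5 v1 v0 v2 v4 v3 + R5 v1 v0 v4 v2 v3) + (- 4%:R) * (R5 v1 v0 v2 v4 v3 - R5 v2 v4 v1 v0 v3) + 16%:R * (R5 v1 v0 v2 v4 v3 + R5 v1 v2 v4 v0 v3 + R5 v1 v4 v0 v2 v3) + 8%:R * (R5 v1 v0 v2 v4 v3 + R5 v1 v0 v4 v3 v2 + R5 v1 v0 v3 v2 v4) + 4%:R * (R5 v1 v0 v3 v2 v4 - R5 v3 v2 v1 v0 v4) + 16%:R * (R5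 v1 v0 v3 v2 v4 + R5 v1 v3 v2 v0 v4 + R5 v1 v2 v0 v3 v4) + 4%:R * (R5 v1 v0 v3 v4 v2 - R5 v3 v4 v1 v0 v2) + (- 16%:R) * (R5 v1 v0 v3 v4 v2 + R5 v1 v3 v4 v0 v2 + R5 v1 v4 v0 v3 v2) + 8%:R * (R5 v1 v0 v4 v2 v3 + R5 v1 v4 v2 v0 v3 + R5 v1 v2 v0 v4 v3) + (- 8%:R) * (R5 v1 v0 v4 v3 v2 + R5 v1 v4 v3 v0 v2 + R5 v1 v3 v0 v4 v2) + (- 48%:R) * (R5 v1 v2 v0 v3 v4 + R5 v1 v2 v3 v0 v4) + (- 16%:R) * (R5 v1 v2 v0 v3 v4 + R5 v1 v2 v3 v4 v0 + R5 v1 v2 v4 v0 v3) + 8%:R * (R5 v1 v2 v0 v4 v3 + R5 v1 v2 v4 v3 v0 + R5 v1 v2 v3 v0 v4) + 4%:R * (R5 v1 v2 v3 v0 v4 - R5 v3 v0 v1 v2 v4) + 4%:R * (R5 v1 v2 v3 v4 v0 - R5 v3 v4 v1 v2 v0) + 8%:R * (R5 v1 v2 v3 v4 v0 + R5 v1 v3 v4 v2 v0 + R5 v1 v4 v2 v3 v0) + (- 8%:R) * (R5 v1 v2 v4 v3 v0 + R5 v1 v4 v3 v2 v0 + R5 v1 v3 v2 v4 v0) + 16%:R * (R5 v1 v3 v0 v2 v4 + R5 v1 v3 v2 v4 v0 + R5 v1 v3 v4 v0 v2) + (- 8%:R) * (R5 v1 v3 v0 v4 v2 + R5 v1 v3 v4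 v2 v0 + R5 v1 v3 v2 v0 v4) + (- 4%:R) * (R5 v1 v3 v2 v0 v4 - R5 v2 v0 v1 v3 v4) + (- 4%:R) * (R5 v1 v3 v2 v4 v0 - R5 v2 v4 v1 v3 v0) + (- 4%:R) * (R5 v1 v4 v2 v0 v3 - R5 v2 v0 v1 v4 v3) + (- 4%:R) * (R5 v1 v4 v2 v3 v0 - R5 v2 v3 v1 v4 v0) + 4%:R * (R5 v1 v4 v3 v0 v2 - R5 v3 v0 v1 v4 v2) + 4%:R * (R5 v1 v4 v3 v2 v0 - R5 v3 v2 v1 v4 v0)).
  rewrite /Xp /sym6; ring.
rewrite e0 e1 e2 e3 e4 e5 e6 e7 e8 e9 e10 e11 e12 e13 e14 e15 e16 e17 e18 e19 e20 e21 e22 e23 e24 e25 e26 e27 e28 e29 e30 e31 e32 e33 e34 e35 e36 e37 e38 e39 e40 e41 e42 e43 e44 e45 e46 e47 e48 e49 e50 e51 e52 e53 e54 e55 e56 e57 e58 e59 e60 e61 e62 e63; ring.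
Qed.
End Cert.



Definition i20 : 'I_2 := @Ordinal 2 0 isT.
Definition i21 : 'I_2 := @Ordinal 2 1 isT.
Definition i30 : 'I_3 := @Ordinal 3 0 isT.
Definition i31 : 'I_3 := @Ordinal 3 1 isT.
Definition i32 : 'I_3 := @Ordinal 3 2 isT.

Lemma tpermv n (x y z : 'I_n) :
  val (tperm x y z) = if val z == val x then val y else if val z == val y then val x else val z.
Proof.
case: tpermP => [->|->|zx zy]; rewrite ?eqxx //.
- by case: eqP.
- have /negbTE -> : val z != val x by apply/eqP => /val_inj.
  by have /negbTE -> : val z != val y by apply/eqP => /val_inj.
Qed.

Lemma ordkV (i : 'I_5) : ordk i = i.
Proof. by case: i => [[|[|[|[|[|m]]]]] Hi] //; apply: val_inj. Qed.

Section Tens.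
Variables (K : fieldType) (V : vectType K).

Lemma S2C (S : tensor V 2) : Defs.symmetric S -> forall x y, S (args2 x y) = S (args2 y x).
Proof.
move=> HS x y; rewrite -(HS (tperm i20 i21) (args2 x y)); congr S.
apply: functional_extensionality => i.
by case: i => [[|[|m]] Hi] //; rewrite /args2 tpermv.
Qed.

Lemma S3C1 (Sh : tensor V 3) : Defs.symmetric Sh ->
  forall x y z, Sh (args3 x y z) = Sh (args3 y x z).
Proof.
move=> HS x y z; rewrite -(HS (tperm i30 i31) (args3 x y z)); congr Sh.
apply: functional_extensionality => i.
by case: i => [[|[|[|m]]] Hi] //; rewrite /args3 tpermv.
Qed.

Lemma S3C2 (Sh : tensor V 3) : Defs.symmetric Sh ->
  forall x y z, Sh (args3 x y z) = Sh (args3 x z y).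
Proof.
move=> HS x y z; rewrite -(HS (tperm i31 i32) (args3 x y z)); congr Sh.
apply: functional_extensionality => i.
by case: i => [[|[|[|m]]] Hi] //; rewrite /args3 tpermv.
Qed.

Section Formula.
Variables (S : tensor V 2) (Sh : tensor V 3).
Hypotheses (HS : Defs.symmetric S) (HSh : Defs.symmetric Sh).
Variable v : 'I_5 -> V.
Let f2 := fun a b => S (args2 (v (ordk a)) (v (ordk b))).
Let f3 := fun a b c => Sh (args3 (v (ordk a)) (v (ordk b)) (v (ordk c))).
Let f2C a b : f2 a b = f2 b a. Proof. exact: S2C. Qed.
Let f3C1 a b c : f3 a b c = f3 b a c. Proof. exact: S3C1. Qed.
Let f3C2 a b c : f3 a b c = f3 a c b. Proof. exact: S3C2. Qed.

Lemma T23E (r : 'I_5 -> 'I_5) :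
  tprod23 S Sh (fun i => v (r i)) = f2 (r o0) (r o1) * f3 (r o2) (r o3) (r o4).
Proof.
rewrite /tprod23 /f2 /f3 !ordkV; congr (S _ * Sh _); apply: functional_extensionality.
- by case=> [[|[|m]] Hi] //=; congr (v (r _)); apply: val_inj.
- by case=> [[|[|[|m]]] Hi] //=; congr (v (r _)); apply: val_inj.
Qed.

Lemma T32E (r : 'I_5 -> 'I_5) :
  tprod32 Sh S (fun i => v (r i)) = f3 (r o0) (r o1) (r o2) * f2 (r o3) (r o4).
Proof.
rewrite /tprod32 /f2 /f3 !ordkV; congr (Sh _ * S _); apply: functional_extensionality.
- by case=> [[|[|[|m]]] Hi] //=; congr (v (r _)); apply: val_inj.
- by case=> [[|[|m]] Hi] //=; congr (v (r _)); apply: val_inj.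
Qed.

Definition FF := 4%:R * (S (args2 (v o0) (v o3)) * Sh (args3 (v o1) (v o2) (v o4))
   - S (args2 (v o1) (v o3)) * Sh (args3 (v o0) (v o2) (v o4))
   + S (args2 (v o1) (v o2)) * Sh (args3 (v o0) (v o3) (v o4))
   - S (args2 (v o0) (v o2)) * Sh (args3 (v o1) (v o3) (v o4))).

Lemma formula23 : ystar t' (tprod23 S Sh) v = FF.
Proof.
rewrite /ystar.
under eq_bigr => p _ do under eq_bigr => q _ do
  rewrite (T23E (fun i => (q^-1)%g ((p^-1)%g i))).
by rewrite (core23 f2C f3C1 f3C2).
Qed.

Lemma formula32 : ystar t' (tprod32 Sh S) v = FF.
Proof.
rewrite /ystar.
under eq_bigr => p _ do under eq_bigr => q _ do
  rewrite (T32E (fun i => (q^-1)%g ((p^-1)%g i))).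
by rewrite (core32 f2C f3C1 f3C2).
Qed.
End Formula.

Lemma ml_fun r (T : tensor V r) (f g : 'I_r -> 'I_r) :
  (forall k i, (f k == i) = (k == g i)) ->
  multilinear T -> multilinear (fun w => T (fun k => w (f k))).
Proof.
move=> Hfg H i w a x y /=.
have U Z : (fun k => if f k == i then Z else w (f k))
         = (fun k => if k == g i then Z else w (f k)).
  by apply: functional_extensionality => k; rewrite Hfg.
by rewrite !U; exact: H.
Qed.

Lemma ystar_ml (T : tensor V 5) : multilinear T -> multilinear (ystar t' T).
Proof.
move=> H i v a x y; rewrite /ystar mulr_sumr -big_split; apply: eq_bigr => p _.
rewrite mulr_sumr -big_split; apply: eq_bigr => q _.
have Hfg : forall k i, ((fun k => (q^-1)%g ((p^-1)%g k)) k == i) = (k == (fun i => p (q i)) i).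
  move=> k j /=; rewrite -(inj_eq (@perm_inj _ q)) permKV.
  by rewrite -(inj_eq (@perm_inj _ p)) permKV.
move: (ml_fun Hfg H i v a x y); cbv beta => E; cbv beta.
by rewrite E mulrDr mulrCA.
Qed.

Lemma tprod23_ml (S : tensor V 2) (Sh : tensor V 3) :
  multilinear S -> multilinear Sh -> multilinear (tprod23 S Sh).
Proof.
move=> HS HSh i v a x y; rewrite /tprod23.
case: (@splitP 2 3 i) => [j Ej|k0 Ek].
- have L1 (Z : V) : (fun k : 'I_2 => if lshift 3 k == i then Z else v (lshift 3 k))
            = (fun k : 'I_2 => if k == j then Z else v (lshift 3 k)).
    by apply: functional_extensionality => k; rewrite -val_eqE /= Ej.
  have L2 (Z : V) : (fun k : 'I_3 => if rshift 2 k == i then Z else v (rshift 2 k))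
            = (fun k : 'I_3 => v (rshift 2 k)).
    apply: functional_extensionality => k; rewrite -val_eqE /= Ej.
    by case: eqP => // E; have := ltn_ord j; rewrite -E ltnNge leq_addr.
  rewrite !L1 !L2 (HS j (fun k => v (lshift 3 k))); ring.
- have L1 (Z : V) : (fun k : 'I_3 => if rshift 2 k == i then Z else v (rshift 2 k))
            = (fun k : 'I_3 => if k == k0 then Z else v (rshift 2 k)).
    by apply: functional_extensionality => k; rewrite -val_eqE /= Ek eqn_add2l.
  have L2 (Z : V) : (fun k : 'I_2 => if lshift 3 k == i then Z else v (lshift 3 k))
            = (fun k : 'I_2 => v (lshift 3 k)).
    apply: functional_extensionality => k; rewrite -val_eqE /= Ek.
    by case: eqP => // E; have := ltn_ord k; rewrite E ltnNge leq_addr.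
  rewrite !L1 !L2 (HSh k0 (fun k => v (rshift 2 k))); ring.
Qed.

Lemma acdctY (S : tensor V 2) (Sh : tensor V 3) :
  sym_tensor S -> sym_tensor Sh -> acdct (ystar t' (tprod23 S Sh)).
Proof.
case=> mS sS [mSh sSh]; split; first exact: ystar_ml (tprod23_ml mS mSh).
move=> u w x y z; rewrite !formula23 //.
pose vv n := nth 0 [:: w; x; y; z; u] n.
pose f2 := fun a b => S (args2 (vv a) (vv b)).
pose f3 := fun a b c => Sh (args3 (vv a) (vv b) (vv c)).
have f2C a b : f2 a b = f2 b a by exact: S2C.
have f3C1 a b c : f3 a b c = f3 b a c by exact: S3C1.
have f3C2 a b c : f3 a b c = f3 a c b by exact: S3C2.
split.
- exact: (Fn1 f2C f3C1 f3C2).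
- exact: (Fn2 f2C f3C1 f3C2).
- exact: (Fn3 f2C f3C1 f3C2).
- exact: (Fn4 f2C f3C1 f3C2).
Qed.

Lemma acdct_ext (R1 R2 : tensor V 5) : (forall v, R1 v = R2 v) -> acdct R1 -> acdct R2.
Proof. by move=> E; rewrite (functional_extensionality _ _ E). Qed.

Lemma acdct0 : acdct (fun _ : 'I_5 -> V => 0 : K).
Proof.
split; first by move=> i v a x y; rewrite mulr0 addr0.
by move=> *; split; rewrite ?oppr0 ?addr0.
Qed.

Lemma acdctD (R1 R2 : tensor V 5) : acdct R1 -> acdct R2 -> acdct (fun v => R1 v + R2 v).
Proof.
case=> m1 H1 [m2 H2]; split.
  by move=> i v a x y; rewrite m1 m2; ring.
move=> u w x y z; have [a1 a2 a3 a4] := H1 u w x y z; have [b1 b2 b3 b4] := H2 u w x y z.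
split.
- by rewrite a1 b1 opprD.
- by rewrite a2 b2.
- have -> : forall A B C D E F : K, (A + D) + (B + E) + (C + F) = (A + B + C) + (D + E + F).
    by move=> *; ring.
  by rewrite a3 b3 addr0.
- have -> : forall A B C D E F : K, (A + D) + (B + E) + (C + F) = (A + B + C) + (D + E + F).
    by move=> *; ring.
  by rewrite a4 b4 addr0.
Qed.

Lemma acdct_sum (L : seq (tensor V 2 * tensor V 3)) : all_sym L ->
  acdct (fun v => \sum_(P <- L) ystar t' (tprod23 P.1 P.2) v).
Proof.
elim: L => [|P L IH] HL.
  by apply: (acdct_ext _ acdct0) => v; rewrite big_nil.
inversion HL as [|? ? [h1 h2] HL']; subst.
apply: (acdct_ext _ (acdctD (acdctY h1 h2) (IH HL'))) => v.
by rewrite big_cons.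
Qed.
End Tens.



Section Conv.
Variables (K : fieldType) (V : vectType K).

Definition t2 (g : V -> V -> K) : tensor V 2 := fun w => g (w i20) (w i21).
Definition t3 (g : V -> V -> V -> K) : tensor V 3 := fun w => g (w i30) (w i31) (w i32).

Lemma ord2E m (H : (m < 2)%N) : Ordinal H = nth i20 [:: i20; i21] m.
Proof. by apply: val_inj; case: m H => [|[|m]]. Qed.
Lemma ord3E m (H : (m < 3)%N) : Ordinal H = nth i30 [:: i30; i31; i32] m.
Proof. by apply: val_inj; case: m H => [|[|[|m]]]. Qed.

Lemma t2_sym g : (forall x y, g x y = g y x) -> Defs.symmetric (t2 g).
Proof.
move=> gC p w; rewrite /t2.
have D : val (p i20) != val (p i21) by rewrite (inj_eq val_inj) (inj_eq perm_inj).
move: D; case: (p i20) => [[|[|m0]] H0] //; case: (p i21) => [[|[|m1]] H1] //=.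
all: rewrite !ord2E /=; first [done | by rewrite gC].
Qed.

Lemma t3_sym g : (forall x y z, g x y z = g y x z) -> (forall x y z, g x y z = g x z y) ->
  Defs.symmetric (t3 g).
Proof.
move=> g1 g2 p w; rewrite /t3.
have D01 : val (p i30) != val (p i31) by rewrite (inj_eq val_inj) (inj_eq perm_inj).
have D02 : val (p i30) != val (p i32) by rewrite (inj_eq val_inj) (inj_eq perm_inj).
have D12 : val (p i31) != val (p i32) by rewrite (inj_eq val_inj) (inj_eq perm_inj).
move: D01 D02 D12; case: (p i30) => [[|[|[|m0]]] H0] //; case: (p i31) => [[|[|[|m1]]] H1] //;
  case: (p i32) => [[|[|[|m2]]] H2] //= _ _ _; rewrite !ord3E /=.
all: first [ done | by rewrite {1}g1 | by rewrite {1}g2 | by rewrite {1}g1 {1}g2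
           | by rewrite {1}g2 {1}g1 | by rewrite {1}g1 {1}g2 {1}g1 ].
Qed.

Lemma t2_ml g : (forall s x y z, g (s *: x + y) z = s * g x z + g y z) ->
  (forall x y, g x y = g y x) -> multilinear (t2 g).
Proof.
move=> gl gC i w s x y; rewrite /t2.
case: i => [[|[|m]] Hi] //; rewrite -!val_eqE /=.
- exact: gl.
- by rewrite !(gC (w i20)) gl.
Qed.

Lemma t3_ml g : (forall s x y z1 z2, g (s *: x + y) z1 z2 = s * g x z1 z2 + g y z1 z2) ->
  (forall x y z, g x y z = g y x z) -> (forall x y z, g x y z = g x z y) ->
  multilinear (t3 g).
Proof.
move=> gl g1 g2 i w s x y; rewrite /t3.
case: i => [[|[|[|m]]] Hi] //; rewrite -!val_eqE /=.
- exact: gl.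
- by rewrite !(g1 (w i30)) gl.
- by rewrite !(g2 (w i30) (w i31)) !(g1 (w i30)) gl.
Qed.

Lemma sym6C1 (F : V -> V -> V -> K) x y z : sym6 F x y z = sym6 F y x z.
Proof. rewrite /sym6; ring. Qed.
Lemma sym6C2 (F : V -> V -> V -> K) x y z : sym6 F x y z = sym6 F x z y.
Proof. rewrite /sym6; ring. Qed.
Lemma sym6L (F : V -> V -> V -> K)
  (F1 : forall s x y a b, F (s *: x + y) a b = s * F x a b + F y a b)
  (F2 : forall s x y a b, F a (s *: x + y) b = s * F a x b + F a y b)
  (F3 : forall s x y a b, F a b (s *: x + y) = s * F a b x + F a b y)
  s x y z1 z2 : sym6 F (s *: x + y) z1 z2 = s * sym6 F x z1 z2 + sym6 F y z1 z2.
Proof. rewrite /sym6 !F1 !F2 !F3; ring. Qed.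

Lemma upd5E (Z p0 p1 p2 p3 p4 : V) :
  [/\ (fun j => if j == o0 then Z else args5 p0 p1 p2 p3 p4 j) = args5 Z p1 p2 p3 p4,
      (fun j => if j == o1 then Z else args5 p0 p1 p2 p3 p4 j) = args5 p0 Z p2 p3 p4,
      (fun j => if j == o2 then Z else args5 p0 p1 p2 p3 p4 j) = args5 p0 p1 Z p3 p4,
      (fun j => if j == o3 then Z else args5 p0 p1 p2 p3 p4 j) = args5 p0 p1 p2 Z p4 &
      (fun j => if j == o4 then Z else args5 p0 p1 p2 p3 p4 j) = args5 p0 p1 p2 p3 Z].
Proof.
by split; apply: functional_extensionality;
  case=> [[|[|[|[|[|m]]]]] Hi] //; rewrite -val_eqE.
Qed.

Section WithR.
Variable R : tensor V 5.
Hypothesis mR : multilinear R.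

Lemma Rlin1 s x y p0 p2 p3 p4 :
  R (args5 p0 (s *: x + y) p2 p3 p4) = s * R (args5 p0 x p2 p3 p4) + R (args5 p0 y p2 p3 p4).
Proof.
have := mR o1 (args5 p0 0 p2 p3 p4) s x y.
by case: (upd5E (s *: x + y) p0 0 p2 p3 p4) => _ -> _ _ _;
   case: (upd5E x p0 0 p2 p3 p4) => _ -> _ _ _; case: (upd5E y p0 0 p2 p3 p4) => _ -> _ _ _.
Qed.
Lemma Rlin0 s x y p1 p2 p3 p4 :
  R (args5 (s *: x + y) p1 p2 p3 p4) = s * R (args5 x p1 p2 p3 p4) + R (args5 y p1 p2 p3 p4).
Proof.
have := mR o0 (args5 0 p1 p2 p3 p4) s x y.
by case: (upd5E (s *: x + y) 0 p1 p2 p3 p4) => -> _ _ _ _;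
   case: (upd5E x 0 p1 p2 p3 p4) => -> _ _ _ _; case: (upd5E y 0 p1 p2 p3 p4) => -> _ _ _ _.
Qed.
Lemma Rlin2 s x y p0 p1 p3 p4 :
  R (args5 p0 p1 (s *: x + y) p3 p4) = s * R (args5 p0 p1 x p3 p4) + R (args5 p0 p1 y p3 p4).
Proof.
have := mR o2 (args5 p0 p1 0 p3 p4) s x y.
by case: (upd5E (s *: x + y) p0 p1 0 p3 p4) => _ _ -> _ _;
   case: (upd5E x p0 p1 0 p3 p4) => _ _ -> _ _; case: (upd5E y p0 p1 0 p3 p4) => _ _ -> _ _.
Qed.
Lemma Rlin3 s x y p0 p1 p2 p4 :
  R (args5 p0 p1 p2 (s *: x + y) p4) = s * R (args5 p0 p1 p2 x p4) + R (args5 p0 p1 p2 y p4).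
Proof.
have := mR o3 (args5 p0 p1 p2 0 p4) s x y.
by case: (upd5E (s *: x + y) p0 p1 p2 0 p4) => _ _ _ -> _;
   case: (upd5E x p0 p1 p2 0 p4) => _ _ _ -> _; case: (upd5E y p0 p1 p2 0 p4) => _ _ _ -> _.
Qed.
Lemma Rlin4 s x y p0 p1 p2 p3 :
  R (args5 p0 p1 p2 p3 (s *: x + y)) = s * R (args5 p0 p1 p2 p3 x) + R (args5 p0 p1 p2 p3 y).
Proof.
have := mR o4 (args5 p0 p1 p2 p3 0) s x y.
by case: (upd5E (s *: x + y) p0 p1 p2 p3 0) => _ _ _ _ ->;
   case: (upd5E x p0 p1 p2 p3 0) => _ _ _ _ ->; case: (upd5E y p0 p1 p2 p3 0) => _ _ _ _ ->.
Qed.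
End WithR.

Lemma Forall_allpairs (A B C : Type) (P : C -> Prop) (f : A -> B -> C) s t :
  (forall a b, P (f a b)) -> List.Forall P [seq f a b | a <- s, b <- t].
Proof.
move=> H; elim: s => [|a s IH] /=; first by constructor.
have Hm : forall u, List.Forall P [seq f a b | b <- u].
  by elim=> [|b u IHu] /=; constructor.
move: (Hm t); elim: [seq f a b | b <- t] => [|x l IHl] //= Hx.
by inversion Hx; constructor; auto.
Qed.

Section Construct.
Variable R : tensor V 5.
Hypothesis HR : acdct R.
Hypothesis H96 : (96%:R : K) != 0.
Let mR : multilinear R := proj1 HR.
Let e := vbasis (fullv : {vspace V}).
Let n := \dim (fullv : {vspace V}).
Definition kap : K := - (96%:R)^-1.

Lemma lin_expand (h : V -> K) (Hh : forall s x y, h (s *: x + y) = s * h x + h y) x :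
  \sum_(i < n) coord e i x * h e`_i = h x.
Proof.
have h0 : h 0 = 0.
  have E := Hh 1 0 0; rewrite scale1r addr0 mul1r in E.
  by apply: (@addrI _ (h 0)); rewrite addr0 -E.
rewrite {2}(coord_vbasis (memvf x)).
elim/big_rec2: _ => [|i y1 y2 _ ->]; first by rewrite h0.
by rewrite Hh.
Qed.

Lemma coordL (a : 'I_n) s x y : coord e a (s *: x + y) = s * coord e a x + coord e a y.
Proof. exact: coord_is_scalar. Qed.

Definition P2 (a b : 'I_n) : V -> V -> K :=
  fun x y => kap * (coord e a x * coord e b y + coord e b x * coord e a y).
Definition Fab (a b : 'I_n) : V -> V -> V -> K := fun x y z => R (args5 e`_a x e`_b y z).
Definition Sc a b := t2 (P2 a b).
Definition Shc a b := t3 (sym6 (Fab a b)).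
Definition Lc := [seq (Sc a b, Shc a b) | a <- index_enum 'I_n, b <- index_enum 'I_n].
Definition R5c (x y z w u : V) := R (args5 x y z w u).

Lemma Sc_sym a b : sym_tensor (Sc a b).
Proof.
split; [apply: t2_ml|apply: t2_sym].
- by move=> s x y z; rewrite /P2 !coordL; ring.
- by move=> x y; rewrite /P2; ring.
- by move=> x y; rewrite /P2; ring.
Qed.

Lemma Shc_sym a b : sym_tensor (Shc a b).
Proof.
split; [apply: t3_ml|apply: t3_sym]; try exact: sym6C1; try exact: sym6C2.
apply: sym6L => *; rewrite /Fab.
- exact: Rlin1.
- exact: Rlin3.
- exact: Rlin4.
Qed.

Lemma Lc_sym : all_sym Lc.
Proof. apply: Forall_allpairs => a b; split; [exact: Sc_sym | exact: Shc_sym]. Qed.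

Lemma sum4 (F1 F2 F3 F4 : 'I_n -> 'I_n -> K) (k : K) :
  \sum_(a < n) \sum_(b < n) k * (F1 a b - F2 a b + F3 a b - F4 a b)
  = k * (\sum_(a < n) \sum_(b < n) F1 a b - \sum_(a < n) \sum_(b < n) F2 a b
       + \sum_(a < n) \sum_(b < n) F3 a b - \sum_(a < n) \sum_(b < n) F4 a b).
Proof.
under eq_bigr => a _ do under eq_bigr => b _ do rewrite mulrBr mulrDr mulrBr.
under eq_bigr => a _ do rewrite sumrB big_split sumrB -!mulr_sumr.
rewrite sumrB big_split sumrB -!mulr_sumr.
by rewrite mulrBr mulrDr mulrBr.
Qed.

Lemma bilQ p q r s t :
  \sum_(a < n) \sum_(b < n) P2 a b p q * sym6 (Fab a b) r s t = kap * Xp R5c p q r s t.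
Proof.
pose f := fun X Y => sym6 (fun x y z => R (args5 X x Y y z)) r s t.
have fl1 : forall s0 x y z, f (s0 *: x + y) z = s0 * f x z + f y z.
  by move=> *; rewrite /f /sym6 !Rlin0 //; ring.
have fl2 : forall s0 x y z, f z (s0 *: x + y) = s0 * f z x + f z y.
  by move=> *; rewrite /f /sym6 !Rlin2 //; ring.
have B1 : forall x y, \sum_(a < n) \sum_(b < n) coord e a x * coord e b y * f e`_a e`_b = f x y.
  move=> x y; transitivity (\sum_(a < n) coord e a x * f e`_a y).
    apply: eq_bigr => a _.
    rewrite -(lin_expand (fun s0 x0 y0 => fl2 s0 x0 y0 e`_a) y) mulr_sumr.
    by apply: eq_bigr => b _; rewrite mulrA.
  exact: (lin_expand (fun s0 x0 y0 => fl1 s0 x0 y0 y) x).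
transitivity (kap * (\sum_(a < n) \sum_(b < n) coord e a p * coord e b q * f e`_a e`_b
                 + \sum_(a < n) \sum_(b < n) coord e a q * coord e b p * f e`_a e`_b)).
  transitivity (\sum_(a < n) \sum_(b < n) (kap * (coord e a p * coord e b q * f e`_a e`_b)
                 + kap * (coord e a q * coord e b p * f e`_a e`_b))).
    by apply: eq_bigr => a _; apply: eq_bigr => b _; rewrite /P2 /f /Fab; ring.
  under eq_bigr => a _ do rewrite big_split -!mulr_sumr.
  by rewrite big_split -!mulr_sumr mulrDr.
by rewrite !B1.
Qed.

Lemma conv_main v : R v = \sum_(P <- Lc) ystar t' (tprod23 P.1 P.2) v.
Proof.
rewrite big_allpairs_dep /=.
transitivity (\sum_(a < n) \sum_(b < n) 4%:R *
   (P2 a b (v o0) (v o3) * sym6 (Fab a b) (v o1) (v o2) (v o4)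
  - P2 a b (v o1) (v o3) * sym6 (Fab a b) (v o0) (v o2) (v o4)
  + P2 a b (v o1) (v o2) * sym6 (Fab a b) (v o0) (v o3) (v o4)
  - P2 a b (v o0) (v o2) * sym6 (Fab a b) (v o1) (v o3) (v o4))); last first.
  apply: eq_bigr => a _; apply: eq_bigr => b _.
  by rewrite /= formula23 //; [case: (Sc_sym a b) | case: (Shc_sym a b)].
rewrite sum4 !bilQ.
have h1 : forall u w x y z, R5c w x y z u = - R5c w x z y u.
  by move=> u w x y z; case: (HR.2 u w x y z).
have h2 : forall u w x y z, R5c w x y z u = R5c y z w x u.
  by move=> u w x y z; case: (HR.2 u w x y z).
have h3 : forall u w x y z, R5c w x y z u + R5c w y z x u + R5c w z x y u = 0.
  by move=> u w x y z; case: (HR.2 u w x y z).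
have h4 : forall u w x y z, R5c w x y z u + R5c w x z u y + R5c w x u y z = 0.
  by move=> u w x y z; case: (HR.2 u w x y z).
have C := cert h1 h2 h3 h4 (v o0) (v o1) (v o2) (v o3) (v o4).
set X1 := Xp R5c _ _ _ _ _ in C *.
set X2 := Xp R5c (v o1) _ _ _ _ in C *.
set X3 := Xp R5c (v o1) (v o2) _ _ _ in C *.
set X4 := Xp R5c (v o0) (v o2) _ _ _ in C *.
rewrite (_ : 4%:R * (kap * X1 - kap * X2 + kap * X3 - kap * X4)
           = kap * (4%:R * (X1 - X2 + X3 - X4))); last by ring.
rewrite C mulrA (_ : kap * - 96%:R = 1) ?mul1r; last first.
  by rewrite /kap mulNr mulrN opprK mulVf.
rewrite /R5c; congr R; apply: functional_extensionality.
by case=> [[|[|[|[|[|m]]]]] Hi] //=; congr v; apply: val_inj.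
Qed.
End Construct.
End Conv.


Lemma sums_eq (K : fieldType) (V : vectType K) (L : seq (tensor V 2 * tensor V 3)) :
  all_sym L -> forall v,
  \sum_(P <- L) ystar t' (tprod23 P.1 P.2) v = \sum_(P <- L) ystar t' (tprod32 P.2 P.1) v.
Proof.
elim: L => [|P L IH] HL v; first by rewrite !big_nil.
inversion HL as [|? ? [[_ h1] [_ h2]] HL']; subst.
by rewrite !big_cons formula23 // formula32 // IH.
Qed.

Lemma Thm_gen (K : fieldType) (H96 : (96%:R : K) != 0) : Thm1p9 K.
Proof.
move=> V; split.
  move=> S Sh [_ HS] [_ HSh]; split.
    by apply: functional_extensionality => v; rewrite formula23 // formula32.
  move=> e _ i j k l s _ _ _ _ _ /=.
  by rewrite formula23 // formula32.
move=> R.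
have E1 : acdct R <-> exists2 L : seq (tensor V 2 * tensor V 3), all_sym L &
    forall v, R v = \sum_(P <- L) ystar t' (tprod23 P.1 P.2) v.
  split.
    move=> HR; exists (Lc R); [exact: Lc_sym HR | exact: conv_main HR H96].
  case=> L HL HRL; exact: (acdct_ext (fun v => esym (HRL v)) (acdct_sum HL)).
split; first exact: E1.
rewrite E1; split; case=> L HL HRL; exists L => // v; rewrite HRL.
  exact: sums_eq.
by rewrite sums_eq.
Qed.

Theorem theorem1p9 : Thm1p9 Rdefinitions.R /\ Thm1p9 (Rdefinitions.R)[i].
Proof.
split; apply: Thm_gen.
  by rewrite Num.Theory.pnatr_eq0.
by rewrite Num.Theory.pnatr_eq0.
Qed.
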